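(* Let $n\ge1$ and $\beta_1,\dots,\beta_n\in\widehat{\mathbb{F}_q^\times}$ with $\beta_1\cdots\beta_n\neq\varepsilon$. Then for every $\nu\in\widehat{\mathbb{F}_q^\times}$, $$\frac{(\beta_1\cdots\beta_n)_\nu}{(\varepsilon)^\circ_\nu}=\frac{1}{(1-q)^{n-1}}\sum_{\substack{\nu_1,\dots,\nu_n\in\widehat{\mathbb{F}_q^\times}\\ \nu_1\cdots\nu_n=\nu}}\prod_{i=1}^n\frac{(\beta_i)_{\nu_i}}{(\varepsilon)^\circ_{\nu_i}}.$$
   Context: $\mathbb{F}_q$ is a finite field with $q$ elements. $\widehat{\mathbb{F}_q^\times}$ is the group of multiplicative characters $\mathbb{F}_q^\times\to\overline{\mathbb{Q}}^\times$, $\varepsilon$ the trivial character; $\delta(\eta)=1$ if $\eta=\varepsilon$, else $0$. $\psi$ is a fixed non-trivial additive character of $\mathbb{F}_q$. $g(\eta)=-\sum_{x\in\mathbb{F}_q^\times}\psi(x)\eta(x)$, $g^\circ(\eta)=q^{\delta(\eta)}g(\eta)$, $(\alpha)_\nu=g(\alpha\nu)/g(\alpha)$, $(\alpha)^\circ_\nu=g^\circ(\alpha\nu)/g^\circ(\alpha)$. *)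

(* Defs.v *)
From HB Require Import structures.
From mathcomp Require Import all_boot all_order all_algebra all_fingroup all_field all_character.
Set Implicit Arguments. Unset Strict Implicit. Unset Printing Implicit Defensive.
Import GRing.Theory Num.Theory.
Local Open Scope ring_scope.

(* Multiplicative characters of F^x : the (linear = irreducible, F^x being
   abelian) characters of the finite group [set: {unit F}], valued in algC
   (a model of \bar{Q}).  They are indexed by Iirr [set: {unit F}]; the
   trivial character epsilon is 1 = 'chi_0. *)
Notation Fx F := [set: {unit F}].

Definition is_nontriv_add_char (F : finFieldType) (psi : F -> algC) : Prop :=
  (forall x y : F, psi (x + y) = psi x * psi y) /\ (exists x : F, psi x != 1).

Definition gauss (F : finFieldType) (psi : F -> algC) (eta : 'CF(Fx F)) : algC :=
  - \sum_(x : {unit F}) psi (val x) * eta x.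

Definition cdelta (F : finFieldType) (eta : 'CF(Fx F)) : nat := (eta == 1)%:R.

Definition gaussc (F : finFieldType) (psi : F -> algC) (eta : 'CF(Fx F)) : algC :=
  (#|F|%:R) ^+ cdelta eta * gauss psi eta.

Definition poch (F : finFieldType) (psi : F -> algC) (alpha nu : 'CF(Fx F)) : algC :=
  gauss psi (alpha * nu) / gauss psi alpha.

Definition pochc (F : finFieldType) (psi : F -> algC) (alpha nu : 'CF(Fx F)) : algC :=
  gaussc psi (alpha * nu) / gaussc psi alpha.

(* Main.v *)
Require Import Defs.
From HB Require Import structures.
From mathcomp Require Import all_boot all_order all_algebra all_fingroup all_field all_character.
From mathcomp Require Import ring.
Import GRing.Theory Num.Theory.
Local Open Scope ring_scope.

Section Basics.
Variable F : finFieldType.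
Local Notation G := (Fx F).

Lemma abelG : abelian G.
Proof. by apply/centsP => x _ y _; apply: val_inj; rewrite /= mulrC. Qed.

Lemma linG (i : Iirr G) : 'chi[G]_i \is a linear_char.
Proof. exact: (char_abelianP _ abelG). Qed.

Definition ext (l : 'CF(G)) (x : F) : algC :=
  if insub x is Some u then l u else 0.

Lemma extE l (u : {unit F}) : ext l (val u) = l u.
Proof. by rewrite /ext valK. Qed.

Lemma ext0 l : ext l 0 = 0.
Proof. by rewrite /ext insubN // unitr0. Qed.

Lemma sum_units (H : F -> algC) : H 0 = 0 ->
  \sum_(u : {unit F}) H (val u) = \sum_x H x.
Proof.
move=> H0; rewrite [RHS](bigD1 0) //= H0 add0r.
rewrite (reindex_omap (val : {unit F} -> F) insub); last first.
  by move=> x nz; rewrite insubT ?unitfE //= => h.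
by apply: eq_bigl => u; rewrite valK eqxx andbT -unitfE (valP u).
Qed.
Local Notation N := (#|G|%:R : algC).

Lemma unitP {x : F} : x != 0 -> exists u : {unit F}, x = val u.
Proof. by rewrite -unitfE => nz; exists (Sub x nz); rewrite SubK. Qed.

Lemma ext_nz l x : x = 0 -> ext l x = 0.
Proof. by move->; exact: ext0. Qed.

Lemma extM l x y : l \is a linear_char -> ext l (x * y) = ext l x * ext l y.
Proof.
move=> Ll.
have [->|nx] := eqVneq x 0; first by rewrite mul0r ext0 mul0r.
have [->|ny] := eqVneq y 0; first by rewrite mulr0 ext0 mulr0.
have [u ->] := unitP nx; have [v ->] := unitP ny.
by rewrite -FinRing.val_unitM !extE lin_charM ?inE.
Qed.

Lemma ext1 l : l \is a linear_char -> ext l 1 = 1.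
Proof. by move=> Ll; rewrite -FinRing.val_unit1 extE lin_char1. Qed.

Lemma extMl (l m : 'CF(G)) x : ext (l * m) x = ext l x * ext m x.
Proof.
have [->|nx] := eqVneq x 0; first by rewrite !ext0 mul0r.
by have [u ->] := unitP nx; rewrite !extE cfunE.
Qed.

Lemma ext_cf1 x : ext 1 x = (x != 0)%:R.
Proof.
have [->|nx] := eqVneq x 0; first by rewrite !ext0.
by have [u ->] := unitP nx; rewrite !extE cfun1E inE.
Qed.

Lemma extV l x : l \is a linear_char -> ext l x * ext l x^-1 = (x != 0)%:R.
Proof.
move=> Ll; have [->|nx] := eqVneq x 0; first by rewrite !ext0 mul0r.
have [u ->] := unitP nx; rewrite -FinRing.val_unitV !extE lin_charV ?inE //.
by rewrite divff // lin_char_neq0 ?inE.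
Qed.

Lemma extVc l x : l \is a linear_char -> ext l x^-1 = (ext l x)^*.
Proof.
move=> Ll; have [->|nx] := eqVneq x 0; first by rewrite invr0 !ext0 conjC0.
by have [u ->] := unitP nx; rewrite -FinRing.val_unitV !extE lin_charV_conj ?inE.
Qed.

Lemma cfun_prodE I (r : seq I) (P : pred I) (f : I -> 'CF(G)) (u : {unit F}) :
  (\prod_(i <- r | P i) f i) u = \prod_(i <- r | P i) f i u.
Proof.
apply: (big_morph (fun l : 'CF(G) => l u)).
  by move=> a b; rewrite cfunE.
by rewrite cfun1E inE.
Qed.

Lemma sum_chi (i : Iirr G) : \sum_(u : {unit F}) 'chi_i u = N * (i == 0)%:R.
Proof.
have := cfdot_irr i 0; rewrite cfdotE irr0 => /(congr1 (fun z => N * z)).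
rewrite mulrA mulfV ?pnatr_eq0 -?lt0n ?cardG_gt0 // mul1r => <-.
by apply: eq_big => [u|u _]; rewrite ?inE // cfun1E inE conjC1 mulr1.
Qed.

Lemma sum_ext {l : 'CF(G)} : l \is a linear_char -> \sum_x ext l x = N * (l == 1)%:R.
Proof.
move=> /lin_char_irr /irrP [i ->].
rewrite -sum_units ?ext0 //; under eq_bigr do rewrite extE.
by rewrite sum_chi irr_eq1.
Qed.

Lemma sum_over_chi x : \sum_(k : Iirr G) ext 'chi_k x = N * (x == 1)%:R.
Proof.
have [->|nx] := eqVneq x 0.
  by rewrite big1 ?(eq_sym 0) ?oner_eq0 ?mulr0 // => k _; rewrite ext0.
have [u ->] := unitP nx; under eq_bigr do rewrite extE.
have := second_orthogonality_relation u (in_setT (1%g : {unit F})).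
rewrite (class1g (in_setT u)) inE.
have -> : ('C_G[u])%g = G.
  apply/setIidPl; rewrite sub_cent1; apply: (subsetP abelG); exact: in_setT.
move=> h; rewrite -[val u == 1]/(val u == val (1%g : {unit F})) val_eqE mulr_natr -h.
by apply: eq_bigr => k _; rewrite lin_char1 ?linG // conjC1 mulr1.
Qed.

Lemma indicator l (nu : Iirr G) : l \is a linear_char ->
  (l == 'chi_nu)%:R = N^-1 * \sum_x ext l x * ext 'chi_nu x^-1.
Proof.
move=> Ll; have := Ll => /lin_char_irr /irrP [i li].
have -> : (l == 'chi_nu) = (i == nu) by rewrite li (inj_eq irr_inj).
rewrite -cfdot_irr -li cfdotE; congr (_ * _).
rewrite -sum_units; last by rewrite !ext0 mul0r.
by apply: eq_big => [u|u _]; rewrite ?inE // -FinRing.val_unitV !extE lin_charV_conj ?inE ?linG.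
Qed.

Lemma qE : (#|F|%:R : algC) = N + 1.
Proof.
rewrite card_finField_unit natr1 prednK //.
by apply/card_gt0P; exists 0.
Qed.

Lemma N_neq0 : N != 0.
Proof. by rewrite pnatr_eq0 -lt0n cardG_gt0. Qed.

Lemma q_neq0 : (#|F|%:R : algC) != 0.
Proof. by rewrite pnatr_eq0 -lt0n; apply/card_gt0P; exists 0. Qed.

Definition mfun (x : F) : F := (1 - x^-1)^-1.

Lemma mfunK : involutive mfun.
Proof.
move=> x; rewrite /mfun invrK.
have -> : 1 - (1 - x^-1) = x^-1 by ring.
by rewrite invrK.
Qed.

Lemma mfun_eq0 x : (mfun x == 0) = (x == 1).
Proof. by rewrite /mfun invr_eq0 subr_eq0 eq_sym invr_eq1. Qed.

Definition jfun (x : F) : F := - x^-1.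
Lemma jfunK : involutive jfun.
Proof. by move=> x; rewrite /jfun invrN invrK opprK. Qed.

Lemma mfun_j u : mfun (jfun u) = (1 + u)^-1.
Proof. by rewrite /mfun /jfun invrN invrK opprK. Qed.


Section Gauss.
Variable psi : F -> algC.
Hypothesis psiD : forall x y, psi (x + y) = psi x * psi y.
Hypothesis psi0 : psi 0 = 1.
Variable a0 : F.
Hypothesis psia : psi a0 != 1.

Definition Gs (h : F -> algC) := \sum_x psi x * h x.

Lemma sum_psi : \sum_x psi x = 0.
Proof.
have : \sum_x psi x = psi a0 * \sum_x psi x.
  rewrite mulr_sumr (reindex_inj (addrI a0)).
  by apply: eq_bigr => x _; rewrite psiD.
move/eqP; rewrite -subr_eq0 -{1}[\sum_x psi x]mul1r -mulrBl mulf_eq0 subr_eq0 eq_sym.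
by rewrite (negbTE psia) => /eqP.
Qed.

Lemma gauss_ext l : gauss psi l = - Gs (ext l).
Proof. rewrite /gauss /Gs -sum_units; last by rewrite ext0 mulr0.
by under [in RHS]eq_bigr do rewrite extE. Qed.

Definition mult (h : F -> algC) := forall x y, h (x * y) = h x * h y.

Lemma psi_scale (C : F -> algC) (c : F) : mult C -> C 0 = 0 ->
  \sum_s psi (c * s) * C s = C c^-1 * Gs C + (c == 0)%:R * \sum_s C s.
Proof.
move=> CM C0; have [->|c0] := eqVneq c 0.
  by rewrite invr0 C0 mul0r add0r mul1r; apply: eq_bigr => s _; rewrite mul0r psi0 mul1r.
have cu : c^-1 \is a GRing.unit by rewrite unitfE invr_eq0.
rewrite mul0r addr0 /Gs mulr_sumr (reindex_inj (mulrI cu)).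
apply: eq_bigr => s _; have -> : c * (c^-1 * s) = s by rewrite mulrA mulfV // mul1r.
by rewrite CM; ring.
Qed.

Lemma prodG (A B C : F -> algC) : mult B -> mult C ->
  (forall x, C x = A x * B x) -> A 0 = 0 ->
  Gs A * Gs B = Gs C * \sum_u B u * C (1 + u)^-1 + B (-1) * \sum_s C s.
Proof.
move=> BM CM CAB A0.
have C0 : C 0 = 0 by rewrite CAB A0 mul0r.
rewrite [Gs A]/Gs [Gs B]/Gs mulr_suml.
transitivity (\sum_s \sum_u B u * (psi ((1 + u) * s) * C s)).
  apply: eq_bigr => s _.
  have [->|s0] := eqVneq s 0.
    by rewrite A0 mulr0 mul0r big1 // => u _; rewrite C0 !mulr0.
  have su : s \is a GRing.unit by rewrite unitfE.
  rewrite mulr_sumr (reindex_inj (mulrI su)); apply: eq_bigr => u _.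
  rewrite BM CAB mulrDl mul1r psiD (mulrC u s).
set p1 := psi s; set p2 := psi (s * u); set a1 := A s; set b1 := B s; set b2 := B u. clearbody p1 p2 a1 b1 b2.
ring.
rewrite exchange_big /=.
under eq_bigr do rewrite -mulr_sumr psi_scale // mulrDr.
rewrite big_split /=; congr (_ + _).
  by rewrite mulr_sumr; apply: eq_bigr => u _; ring.
rewrite (bigD1 (-1)) //= [X in _ + X = _]big1 ?addr0.
  by rewrite addrN eqxx mul1r.
move=> u /negbTE h; rewrite (_ : (1 + u == 0) = false) ?mul0r ?mulr0 //.
by rewrite addrC addr_eq0 h.
Qed.

Lemma lin1 : (1 : 'CF(G)) \is a linear_char.
Proof. exact: cfun1_lin_char. Qed.

Lemma multE {l : 'CF(G)} : l \is a linear_char -> mult (ext l).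
Proof. by move=> Ll x y; exact: extM. Qed.

Lemma multV {l : 'CF(G)} : l \is a linear_char -> mult (fun x => ext l x^-1).
Proof. by move=> Ll x y /=; rewrite invfM extM. Qed.

Lemma Gs1 : Gs (ext 1) = -1.
Proof.
have := sum_psi; rewrite (bigD1 0) //= psi0 => h.
rewrite /Gs (bigD1 0) //= ext0 mulr0 add0r.
move/eqP: h; rewrite addrC addr_eq0 => /eqP <-.
by apply: eq_bigr => x nx; rewrite ext_cf1 nx mulr1.
Qed.

Lemma gauss1 : gauss psi 1 = 1.
Proof. by rewrite gauss_ext Gs1 opprK. Qed.

Lemma extN1 {l : 'CF(G)} : l \is a linear_char -> ext l (-1) * ext l (-1) = 1.
Proof. by move=> Ll; rewrite -extM // mulrNN mulr1 ext1. Qed.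

Lemma gauss_pair {l : 'CF(G)} : l \is a linear_char ->
  Gs (ext l) * Gs (fun x => ext l x^-1) = ext l (-1) * (N + 1) - N * (l == 1)%:R.
Proof.
move=> Ll.
rewrite (prodG (ext l) _ (ext 1) (multV Ll) (multE lin1)); first last.
- exact: ext0.
- by move=> x; rewrite extV // ext_cf1.
rewrite Gs1 (sum_ext lin1) eqxx mulr1 invrN1.
have -> : \sum_u ext l u^-1 * ext 1 (1 + u)^-1 = N * (l == 1)%:R - ext l (-1).
  rewrite -(sum_ext Ll) [in RHS](reindex_inj invr_inj) /=.
  rewrite (bigD1 (-1)) //= [in RHS](bigD1 (-1)) //= invrN1 addrN invr0 ext0 mulr0 add0r.
  rewrite addrAC subrr add0r; apply: eq_bigr => u h.
  by rewrite ext_cf1 invr_eq0 addrC addr_eq0 h mulr1.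
ring.
Qed.

Lemma extN1_neq0 {l : 'CF(G)} : l \is a linear_char -> ext l (-1) != 0.
Proof. by move=> Ll; apply/eqP => h; have := extN1 Ll; rewrite h mul0r => /eqP; rewrite eq_sym oner_eq0. Qed.

Lemma gauss_nz {l : 'CF(G)} : l \is a linear_char -> gauss psi l != 0.
Proof.
move=> Ll; have [->|l1] := eqVneq l 1; first by rewrite gauss1 oner_eq0.
have := gauss_pair Ll; rewrite (negbTE l1) mulr0 subr0 gauss_ext oppr_eq0 => h.
apply/negP => /eqP g0; move: h; rewrite g0 mul0r => /eqP; rewrite eq_sym mulf_eq0.
by rewrite (negbTE (extN1_neq0 Ll)) -qE (negbTE q_neq0).
Qed.


Definition phi (l : 'CF(G)) (x : F) : algC :=
  - ext l (mfun x) + (x == 1)%:R * (N * (l == 1)%:R).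

Lemma Tsplit l m : m \is a linear_char ->
  \sum_x phi l x * ext m x = - \sum_x ext l (mfun x) * ext m x + N * (l == 1)%:R.
Proof.
move=> Lm; rewrite /phi; under eq_bigr do rewrite mulrDl mulNr.
rewrite big_split /= sumrN; congr (_ + _).
rewrite (bigD1 1) //= eqxx ext1 // mul1r mulr1 big1 ?addr0 // => x /negbTE ->.
by rewrite !mul0r.
Qed.

Lemma gaussc1 : gaussc psi 1 = #|F|%:R.
Proof. by rewrite /gaussc /cdelta eqxx gauss1 expr1 mulr1. Qed.

Lemma keyA l m : l \is a linear_char -> m \is a linear_char ->
  poch psi l m / pochc psi 1 m = \sum_x phi l x * ext m x.
Proof.
move=> Ll Lm; rewrite Tsplit //.
rewrite /pochc mul1r gaussc1.
have [->|m1] := eqVneq m 1.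
  rewrite gaussc1 divff ?q_neq0 // invr1 mulr1 /poch mulr1 divff ?gauss_nz //.
  under eq_bigr do rewrite ext_cf1.
  rewrite (reindex_inj (inv_inj mfunK)) /=.
  under eq_bigr do rewrite mfunK mfun_eq0.
  rewrite -(sum_ext Ll) [in RHS](bigD1 1) //= [X in _ = _ + X](bigD1 1) //= eqxx mulr0 add0r.
  under [X in _ = - X + _]eq_bigr => x h do rewrite h mulr1.
  rewrite ext1 //; ring.
rewrite /gaussc /cdelta (negbTE m1) expr0 mul1r /poch !gauss_ext.
set a := Gs (ext (l * m)); set c := Gs (ext l); set e := Gs (ext m).
set b := Gs (fun x => ext m x^-1).
set S' := \sum_u ext m u^-1 * ext l (1 + u)^-1.
set E := ext m (-1); set dN := N * (l == 1)%:R.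
set T := - \sum_x ext l (mfun x) * ext m x + dN.
have h1 : a * b = c * S' + E * dN.
  rewrite /a /b /c (prodG (ext (l * m)) _ (ext l) (multV Lm) (multE Ll)); first last.
  - exact: ext0.
  - move=> x; rewrite extMl -mulrA extV //.
    by have [->|nx] := eqVneq x 0; rewrite ?ext0 ?mul0r // mulr1.
  by rewrite invrN1 (sum_ext Ll).
have h2 : e * b = E * (N + 1).
  by have := gauss_pair Lm; rewrite (negbTE m1) mulr0 subr0.
have EE : E * E = 1 by exact: extN1.
have h3 : E * T = - S' + E * dN.
  rewrite /T mulrDr mulrN mulr_sumr; congr (- _ + _).
  rewrite (reindex_inj (inv_inj jfunK)) /=; apply: eq_bigr => u _.
  rewrite mfun_j /jfun -mulN1r extM // -/E.
  transitivity ((E * E) * (ext m u^-1 * ext l (1 + u)^-1)); first by ring.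
  by rewrite EE mul1r.
have h4 : c * dN = - dN.
  rewrite /dN; case: eqP => [l1|_]; last by rewrite !mulr0 oppr0.
  by rewrite /c l1 Gs1 mulN1r.
have c0 : c != 0 by have := gauss_nz Ll; rewrite gauss_ext oppr_eq0.
have e0 : e != 0 by have := gauss_nz Lm; rewrite gauss_ext oppr_eq0.
have b0 : b != 0.
  apply/eqP => b0; move: h2; rewrite b0 mulr0 => /eqP; rewrite eq_sym mulf_eq0.
  by rewrite (negbTE (extN1_neq0 Lm)) -qE (negbTE q_neq0).
have key : c * e * T = - (N + 1) * a.
  apply: (mulIf b0).
  transitivity ((e * b) * (c * T)); first by ring.
  rewrite h2.
  transitivity ((N + 1) * c * (E * T)); first by ring.
  rewrite h3.
  transitivity (- (N + 1) * (c * S' - E * (c * dN))); first by ring.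
  by rewrite h4 mulrN opprK -h1; ring.
rewrite -[T](mulfK (mulf_neq0 c0 e0)) (mulrC T) key qE.
have q0 : N + 1 != 0 by rewrite -qE q_neq0.
field.
by rewrite c0 e0 q0.
Qed.


Lemma ext_prod (I : Type) (r : seq I) (P : pred I) (f : I -> 'CF(G)) x : x != 0 ->
  ext (\prod_(i <- r | P i) f i) x = \prod_(i <- r | P i) ext (f i) x.
Proof.
move=> nx; have [u ->] := unitP nx; rewrite extE cfun_prodE.
by apply: eq_bigr => i _; rewrite extE.
Qed.

Lemma mfun1 : mfun 1 = 0.
Proof. by rewrite /mfun invr1 subrr invr0. Qed.

Lemma phi_prod k (b : 'I_k.+1 -> Iirr G) y : \prod_i 'chi_(b i) != 1 ->
  phi (\prod_i 'chi_(b i)) y = (-1) ^+ k * \prod_i phi 'chi_(b i) y.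
Proof.
move=> hb; rewrite /phi; have [->|y1] := eqVneq y 1.
  rewrite mul1r (negbTE hb) mulr0 mfun1 ext0 oppr0 add0r.
  have [i hi] : exists i, 'chi_(b i) != 1.
    apply/existsP; apply: contraR hb; rewrite negb_exists => /forallP h; apply/eqP.
    by rewrite big1 // => i _; apply/eqP; have := h i; rewrite negbK.
  under eq_bigr do rewrite ext0 oppr0 add0r mul1r.
  by rewrite (bigD1 i) //= (negbTE hi) mulr0 mul0r mulr0.
rewrite mul0r addr0.
rewrite (eq_bigr (fun i => - ext 'chi_(b i) (mfun y))); last by move=> i _; rewrite mul0r addr0.
rewrite prodrN cardE size_enum_ord ext_prod ?mfun_eq0 // exprS !mulrA.
have -> : ((-1) ^+ k * -1 * (-1) ^+ k : algC) = -1.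
  by rewrite mulrAC -expr2 -exprM mulnC exprM sqrrN !expr1n mul1r.
by rewrite mulN1r.
Qed.

Lemma inner_sum (f : F -> algC) y :
  \sum_(k : Iirr G) ext 'chi_k y * \sum_x f x * ext 'chi_k x = N * f y^-1 * (y != 0)%:R.
Proof.
under eq_bigr do rewrite mulr_sumr.
rewrite exchange_big /=.
under eq_bigr => x _ do (under eq_bigr => k _ do rewrite mulrCA -extM ?linG //; rewrite -mulr_sumr sum_over_chi).
have [y0|/negPn/eqP ->] := boolP (y != 0); last first.
  by rewrite mulr0 big1 // => x _; rewrite mul0r (eq_sym 0) oner_eq0 !mulr0.
rewrite mulr1 (bigD1 y^-1) //= mulfV // eqxx mulr1 big1 ?addr0; first by rewrite mulrC.
move=> x hx; rewrite (_ : (y * x == 1) = false) ?mulr0 //.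
apply/negbTE; apply: contra hx => /eqP h; apply/eqP.
by rewrite -[x]mul1r -(mulVf y0) -mulrA h mulr1.
Qed.

End Gauss.
End Basics.

Theorem lemma3p22 (F : finFieldType) (psi : F -> algC)
    (hpsi : is_nontriv_add_char psi)
    (n : nat) (hn : (1 <= n)%N) (beta : 'I_n -> Iirr (Fx F))
    (hbeta : \prod_(i < n) 'chi_(beta i) != 1)
    (nu : Iirr (Fx F)) :
  poch psi (\prod_(i < n) 'chi_(beta i)) 'chi_nu / pochc psi 1 'chi_nu =
  (1 - (#|F|%:R : algC)) ^- n.-1 *
  \sum_(nus : {ffun 'I_n -> Iirr (Fx F)} |
          \prod_(i < n) 'chi_(nus i) == 'chi_nu)
     \prod_(i < n) (poch psi 'chi_(beta i) 'chi_(nus i)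
                    / pochc psi 1 'chi_(nus i)).
Proof.
case: n hn beta hbeta => // k _ beta hbeta /=.
case: hpsi => psiD [a0 psia].
have psi00 : psi 0 = psi 0 * psi 0 by rewrite -psiD addr0.
have [p0|p0] := eqVneq (psi 0) 0.
  have psiz x : psi x = 0 by rewrite -[x]addr0 psiD p0 mulr0.
  have gz l : gauss psi l = 0.
    by rewrite /gauss big1 ?oppr0 // => u _; rewrite psiz mul0r.
  rewrite /poch /pochc !gz !mul0r big1 ?mulr0 // => nus _.
  by rewrite big_ord_recl /poch gz !mul0r.
have psi0 : psi 0 = 1.
  by apply: (mulfI p0); rewrite mulr1 -psi00.
set N := (#|[set: {unit F}]|%:R : algC).
set beta' := \prod_(i < k.+1) 'chi_(beta i).
have Lb : beta' \is a linear_char by apply: rpred_prod => i _; exact: linG.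
rewrite (@keyA F psi psiD psi0 a0 psia _ _ Lb (linG _ _)).
under eq_bigr => nus _ do under eq_bigr => i _ do
  rewrite (@keyA F psi psiD psi0 a0 psia _ _ (linG _ _) (linG _ _)).
set E := ext F.
set Q := fun nus : {ffun 'I_k.+1 -> Iirr [set: {unit F}]} =>
  \prod_(i < k.+1) \sum_x phi F 'chi_(beta i) x * E 'chi_(nus i) x.
have step1 : forall nus : {ffun 'I_k.+1 -> Iirr [set: {unit F}]},
   (if \prod_(i < k.+1) 'chi_(nus i) == 'chi_nu then Q nus else 0) =
   N^-1 * \sum_y (\prod_i E 'chi_(nus i) y) * E 'chi_nu y^-1 * Q nus.
  move=> nus.
  have Ln : \prod_(i < k.+1) 'chi_(nus i) \is a linear_char.
    by apply: rpred_prod => i _; exact: linG.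
  have -> : forall (c : bool) (z : algC), (if c then z else 0) = c%:R * z.
    by move=> [] z; rewrite ?mul1r ?mul0r.
  rewrite (indicator _ _ nu Ln) -mulrA mulr_suml; congr (_ * _); apply: eq_bigr => y _.
  congr (_ * _); have [->|y0] := eqVneq y 0; first by rewrite invr0 /E !ext0 !mulr0.
  by rewrite /E ext_prod.
rewrite [X in _ * X]big_mkcond /=.
rewrite (eq_bigr (fun nus : {ffun 'I_k.+1 -> Iirr [set: {unit F}]} =>
   N^-1 * \sum_y (\prod_i E 'chi_(nus i) y) * E 'chi_nu y^-1 * Q nus)); last first.
  by move=> nus _; exact: step1.
rewrite -mulr_sumr exchange_big /=.
have step2 : forall y, \sum_(nus : {ffun 'I_k.+1 -> Iirr [set: {unit F}]})
    (\prod_i E 'chi_(nus i) y) * E 'chi_nu y^-1 * Q nus =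
    E 'chi_nu y^-1 * \prod_(i < k.+1) (N * phi F 'chi_(beta i) y^-1 * (y != 0)%:R).
  move=> y.
  rewrite (eq_bigr (fun nus : {ffun 'I_k.+1 -> Iirr [set: {unit F}]} =>
    E 'chi_nu y^-1 * \prod_(i < k.+1) (E 'chi_(nus i) y *
        \sum_x phi F 'chi_(beta i) x * E 'chi_(nus i) x))); last first.
    by move=> nus _; rewrite big_split /= /Q; ring.
  rewrite -mulr_sumr -(bigA_distr_bigA (fun i (kk : Iirr [set: {unit F}]) =>
    E 'chi_kk y * \sum_x phi F 'chi_(beta i) x * E 'chi_kk x)) /=.
  by congr (_ * _); apply: eq_bigr => i _; rewrite /E inner_sum.
rewrite [X in _ = _ * (_ * X)](eq_bigr (fun y => E 'chi_nu y^-1 *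
   \prod_(i < k.+1) (N * phi F 'chi_(beta i) y^-1 * (y != 0)%:R))); last first.
  by move=> y _; exact: step2.
rewrite [X in _ = _ * (_ * X)](reindex_inj invr_inj) /=.
under [X in _ = _ * (_ * X)]eq_bigr do rewrite invrK.
have step3 : forall y, E 'chi_nu y *
    \prod_(i0 < k.+1) (N * phi F 'chi_(beta i0) y * (y^-1 != 0)%:R) =
    N ^+ k.+1 * ((-1) ^+ k * (phi F beta' y * E 'chi_nu y)).
  move=> y; have [->|y0] := eqVneq y 0; first by rewrite /E ext0 !mul0r !mulr0.
  rewrite invr_eq0 y0 /=.
  under eq_bigr do rewrite mulr1.
  rewrite big_split /= prodr_const card_ord.
  have -> : \prod_(i < k.+1) phi F 'chi_(beta i) y = (-1) ^+ k * phi F beta' y.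
    rewrite /beta' (phi_prod _ _ _ _ hbeta) mulrA -expr2 -exprM mulnC exprM.
    by rewrite sqrrN !expr1n mul1r.
  ring.
rewrite (eq_bigr _ (fun y _ => step3 y)) -mulr_sumr -mulr_sumr.
rewrite qE (_ : 1 - (N + 1) = - N); last by ring.
rewrite [(- N) ^+ k]exprNn invfM exprS.
have s0 : ((-1) ^+ k : algC) != 0 by rewrite signr_eq0.
have n0 : N ^+ k != 0 by rewrite expf_neq0 // N_neq0.
have n1 : N != 0 by exact: N_neq0.
field.
by rewrite s0 n0 n1.
Qed.
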